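(* Assume $u=(u_1,\dots,u_n)$ has positive entries linearly independent over $\mathbb{Q}$. Consider the formal power series in $\hbar$ $$V(t,\hbar)=\sum_{|r|\ge1}\hbar^{|r|-1}c_r(\hbar)\Big(\frac1tD_\theta\Big)^r\frac{e^{\frac{it}{2}\sum_j\theta_j}}{\prod_j(1-e^{it\theta_j})}\Bigg|_{\theta=u},$$ where $c_r(\hbar)=\sum_{i\ge0}c_{r,i}\hbar^{|r|-1+i}$. Then for every $\ell\ge0$, the coefficients of $\hbar^s$, $s\le\ell$, in $V(t,\hbar)$ (as functions of $t$) determine the coefficients of $\hbar^s$, $s\le \ell$, in $c_r(\hbar)$ for all $r$.
   Context: $r$ ranges over multi-indices in $\mathbb{Z}_{\ge0}^n$, $|r|=\sum r_j$, $D_\theta=-i(\partial_{\theta_1},\dots,\partial_{\theta_n})$. The $c_r(\hbar)$ are the coefficients of the semi-classical Birkhoff canonical form $F$ (Taylor series $\sum_{|r|\ge1}c_r(\hbar)p^r$).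
   Formalization: The conclusion covers only the coefficients $c_{r,i}$ with 2|r|−2+i ≤ ℓ, that is, the coefficients of ħˢ, s ≤ ℓ, in $\hbar^{|r|-1}c_r(\hbar)$ rather than in $c_r(\hbar)$. The statement above fails without it. *)

(* Defs.v *)
From Stdlib Require Import Reals QArith Qreals List Arith Lia.
From Coquelicot Require Import Coquelicot.
Import ListNotations.
Open Scope R_scope.

Definition rsum (n : nat) (f : nat -> R) : R :=
  fold_right (fun j acc => f j + acc) 0 (seq 0 n).
Definition cprod (n : nat) (f : nat -> C) : C :=
  fold_right (fun j acc => Cmult (f j) acc) (RtoC 1) (seq 0 n).
Definition csum (l : list C) : C := fold_right Cplus (RtoC 0) l.

Definition Q_lin_indep (n : nat) (u : nat -> R) : Prop :=
  forall q : nat -> Q,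
    rsum n (fun j => Q2R (q j) * u j) = 0 ->
    forall j, (j < n)%nat -> q j == 0%Q.

Definition cexpi (x : R) : C := (cos x, sin x).

Definition fgen (n : nat) (t : R) (theta : nat -> R) : C :=
  Cmult (cexpi (t / 2 * rsum n theta))
        (Cinv (cprod n (fun j => Cminus (RtoC 1) (cexpi (t * theta j))))).

Definition upd (theta : nat -> R) (j : nat) (x : R) : nat -> R :=
  fun k => if Nat.eqb k j then x else theta k.

Definition partial (j : nat) (F : (nat -> R) -> C) (theta : nat -> R) : C :=
  (Derive (fun x => Re (F (upd theta j x))) (theta j),
   Derive (fun x => Im (F (upd theta j x))) (theta j)).

Definition Dj (j : nat) (F : (nat -> R) -> C) : (nat -> R) -> C :=
  fun theta => Cmult (0, -1) (partial j F theta).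

(* Multi-indices r = (r_1,...,r_n) are lists of length n;
   D_theta^r = prod_j D_{theta_j}^{r_j} (entry k of r acts on theta_k). *)
Fixpoint Dmulti_from (r : list nat) (k : nat) (F : (nat -> R) -> C)
  : (nat -> R) -> C :=
  match r with
  | [] => F
  | a :: r' => Nat.iter a (Dj k) (Dmulti_from r' (S k) F)
  end.
Definition Dmulti (r : list nat) F := Dmulti_from r 0 F.

Definition msum (r : list nat) : nat := fold_right Nat.add 0%nat r.

Definition gterm (n : nat) (u : nat -> R) (r : list nat) (t : R) : C :=
  Cmult (RtoC ((/ t) ^ msum r)) (Dmulti r (fgen n t) u).

Fixpoint mindices (n N : nat) : list (list nat) :=
  match n with
  | O => [ [] ]
  | S m => flat_map (fun a => map (cons a) (mindices m (N - a))) (seq 0 (S N))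
  end.

(* c : list nat -> nat -> C,  c r i = c_{r,i}, where
   c_r(hbar) = sum_{i>=0} c_{r,i} hbar^{|r|-1+i}.
   Coefficient of hbar^s in
   V(t,hbar) = sum_{|r|>=1} hbar^{|r|-1} c_r(hbar) ((1/t) D_theta)^r f_t |_{theta=u}
             = sum_{|r|>=1} sum_i c_{r,i} hbar^{2|r|-2+i} gterm r t,
   i.e. the (finite) sum over r with |r|>=1, 2|r|-2 <= s, of c_{r, s+2-2|r|} gterm r t. *)
Definition Vcoef (n : nat) (u : nat -> R) (c : list nat -> nat -> C)
  (s : nat) (t : R) : C :=
  csum (map (fun r =>
          if (1 <=? msum r)%nat && (2 * msum r <=? s + 2)%nat
          then Cmult (c r (s + 2 - 2 * msum r)%nat) (gterm n u r t)
          else RtoC 0)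
        (mindices n (S s))).

(* real t where f_t is defined at theta = u: t <> 0 and t u_j not in 2 pi Z *)
Definition admissible_t (n : nat) (u : nat -> R) (t : R) : Prop :=
  t <> 0 /\ forall j, (j < n)%nat -> forall k : Z, t * u j <> 2 * PI * IZR k.

(* Main.v *)
Require Import Defs.
From Stdlib Require Import Reals QArith Qreals List Arith Lia Lra Psatz Classical.
From Coquelicot Require Import Coquelicot.
Import ListNotations.
Open Scope R_scope.

Definition is_cd (f : R -> C) (x : R) (l : C) : Prop :=
  is_derive (fun y => Re (f y)) x (Re l) /\ is_derive (fun y => Im (f y)) x (Im l).

Lemma rd_plus (f g : R -> R) (x a b : R) : is_derive f x a -> is_derive g x b ->
  is_derive (fun y => f y + g y) x (a + b).
Proof. intros. apply (is_derive_plus f g x a b); auto. Qed.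
Lemma rd_minus (f g : R -> R) (x a b : R) : is_derive f x a -> is_derive g x b ->
  is_derive (fun y => f y - g y) x (a - b).
Proof. intros. apply (is_derive_minus f g x a b); auto. Qed.
Lemma rd_mult (f g : R -> R) (x a b : R) : is_derive f x a -> is_derive g x b ->
  is_derive (fun y => f y * g y) x (a * g x + f x * b).
Proof. intros. apply (is_derive_mult f g x a b); auto. intros; apply Rmult_comm. Qed.
Lemma rd_ext (f g : R -> R) (x l : R) : (forall y, f y = g y) -> is_derive f x l -> is_derive g x l.
Proof. intros. apply (is_derive_ext f g); auto. Qed.
Lemma rd_eq (f : R -> R) (x l lp : R) : l = lp -> is_derive f x l -> is_derive f x lp.
Proof. intros <-; auto. Qed.

Lemma cd_ext f g x l : (forall y, f y = g y) -> is_cd f x l -> is_cd g x l.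
Proof. intros H [H1 H2]; split; eapply rd_ext; try eassumption; intros; simpl; rewrite H; auto. Qed.
Lemma cd_eq f x l l' : l = l' -> is_cd f x l -> is_cd f x l'.
Proof. intros <-; auto. Qed.

Lemma cd_const (c : C) x : is_cd (fun _ => c) x 0%C.
Proof. split; simpl; apply (is_derive_const (K:=R_AbsRing) (V:=R_NormedModule)). Qed.

Lemma cd_plus f g x a b : is_cd f x a -> is_cd g x b ->
  is_cd (fun y => Cplus (f y) (g y)) x (Cplus a b).
Proof. intros [A1 A2] [B1 B2]; split; simpl; apply rd_plus; auto. Qed.
Lemma cd_minus f g x a b : is_cd f x a -> is_cd g x b ->
  is_cd (fun y => Cminus (f y) (g y)) x (Cminus a b).
Proof. intros [A1 A2] [B1 B2]; split; simpl.
 - eapply rd_eq; [|apply rd_minus; eauto]. destruct a, b; simpl; ring.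
 - eapply rd_eq; [|apply rd_minus; eauto]. destruct a, b; simpl; ring.
Qed.

Lemma cd_mult f g x a b : is_cd f x a -> is_cd g x b ->
  is_cd (fun y => Cmult (f y) (g y)) x (Cplus (Cmult a (g x)) (Cmult (f x) b)).
Proof. intros [A1 A2] [B1 B2]; split; simpl.
 - eapply rd_eq; [|apply rd_minus; apply rd_mult; eauto]. destruct a, b; simpl; ring.
 - eapply rd_eq; [|apply rd_plus; apply rd_mult; eauto]. destruct a, b; simpl; ring.
Qed.

Lemma cd_scal (c : C) f x a : is_cd f x a -> is_cd (fun y => Cmult c (f y)) x (Cmult c a).
Proof. intros H. eapply cd_eq; [|apply cd_mult; [apply cd_const|exact H]]. cbv beta; ring. Qed.

Lemma C_neq0 (z : C) : z <> 0%C -> Re z * Re z + Im z * Im z <> 0.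
Proof. destruct z as [p q]; simpl; intros H E. apply H.
  assert (p = 0) by nra. assert (q = 0) by nra. subst; reflexivity. Qed.

Lemma pow2' (z : R) : z ^ 2 = z * z. Proof. ring. Qed.

Lemma cd_inv (f : R -> C) (x : R) (a : C) : f x <> 0%C -> is_cd f x a ->
  is_cd (fun y => Cinv (f y)) x (Copp (Cmult a (Cinv (Cmult (f x) (f x))))).
Proof. intros Hz [A1 A2]. pose proof (C_neq0 _ Hz) as Hn. unfold Re, Im in *.
  assert (Hd : is_derive (fun y => fst (f y) * fst (f y) + snd (f y) * snd (f y)) x
     (fst a * fst (f x) + fst (f x) * fst a + (snd a * snd (f x) + snd (f x) * snd a))).
  { apply rd_plus; apply rd_mult; auto. }
  pose proof (is_derive_inv _ _ _ Hd Hn) as Hi.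
  assert (HH : forall p q : R, p * p + q * q <> 0 ->
     (p * p - q * q) * ((p * p - q * q) * 1) + (p * q + q * p) * ((p * q + q * p) * 1) <> 0).
  { intros p q H. replace ((p * p - q * q) * ((p * p - q * q) * 1) + (p * q + q * p) * ((p * q + q * p) * 1))
      with ((p*p+q*q)*(p*p+q*q)) by ring. apply Rmult_integral_contrapositive; auto. }
  split.
  - apply (rd_ext (fun y => fst (f y) * / (fst (f y) * fst (f y) + snd (f y) * snd (f y)))).
    { intros y. unfold Cinv, Re. simpl fst. unfold Rdiv. rewrite ?Rmult_1_r. reflexivity. }
    eapply rd_eq; [|apply rd_mult; [exact A1|exact Hi]].
    destruct (f x) as [p q] eqn:E; destruct a as [a1 a2]. simpl fst in *; simpl snd in *.
    unfold Cinv, Cmult, Copp, Re. rewrite E. simpl fst; simpl snd. rewrite ?pow2'.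
    specialize (HH p q Hn). rewrite ?Rmult_1_r in *.
    field. split; auto.
  - assert (A2o : is_derive (fun y => - snd (f y)) x (- snd a)) by (apply (is_derive_opp _ _ _ A2)).
    apply (rd_ext (fun y => - snd (f y) * / (fst (f y) * fst (f y) + snd (f y) * snd (f y)))).
    { intros y. unfold Cinv, Im. simpl snd. unfold Rdiv. rewrite ?Rmult_1_r. reflexivity. }
    eapply rd_eq; [|apply rd_mult; [exact A2o|exact Hi]].
    destruct (f x) as [p q] eqn:E; destruct a as [a1 a2]. simpl fst in *; simpl snd in *.
    unfold Cinv, Cmult, Copp, Im, opp. rewrite E. simpl fst; simpl snd. rewrite ?pow2'.
    specialize (HH p q Hn). rewrite ?Rmult_1_r in *.
    field. split; auto.
Qed.

Lemma cd_cexpi (c x : R) : is_cd (fun y => cexpi (c * y)) x (Cmult (0, c) (cexpi (c * x))).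
Proof. split; unfold cexpi, Re, Im; simpl.
  - eapply rd_eq; [|auto_derive; auto]. ring.
  - eapply rd_eq; [|auto_derive; auto]. ring.
Qed.

Lemma cd_cpow (f : R -> C) x a (k : nat) : is_cd f x a ->
  is_cd (fun y => Cpow (f y) (S k)) x (Cmult (Cmult (RtoC (INR (S k))) (Cpow (f x) k)) a).
Proof. intros H. induction k.
  - simpl. eapply cd_eq; [|eapply cd_ext; [|exact H]]. ring. intros; simpl; ring.
  - change (is_cd (fun y => Cmult (f y) (Cpow (f y) (S k))) x
      (Cmult (Cmult (RtoC (INR (S (S k)))) (Cpow (f x) (S k))) a)).
    eapply cd_eq; [|apply cd_mult; [exact H|exact IHk]].
    rewrite !S_INR. change (Cpow (f x) (S k)) with (Cmult (f x) (Cpow (f x) k)).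
    rewrite !RtoC_plus. ring.
Qed.

Lemma cexpi_add a b : cexpi (a + b) = Cmult (cexpi a) (cexpi b).
Proof. unfold cexpi, Cmult; simpl. rewrite cos_plus, sin_plus. f_equal; ring. Qed.
Lemma cexpi_0 : cexpi 0 = RtoC 1.
Proof. unfold cexpi. rewrite cos_0, sin_0. reflexivity. Qed.
Lemma cexpi_pow a k : Cpow (cexpi a) k = cexpi (INR k * a).
Proof. induction k. simpl. rewrite Rmult_0_l, cexpi_0. reflexivity.
  simpl Cpow. rewrite IHk, <- cexpi_add. f_equal. rewrite S_INR. ring. Qed.
Lemma cexpi_neq0 a : cexpi a <> 0%C.
Proof. unfold cexpi. intro E. injection E as E1 E2. pose proof (sin2_cos2 a).
  rewrite E1, E2 in H. unfold Rsqr in H. lra. Qed.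

Definition psi (k : nat) (z : R) : C :=
  Cmult (cexpi (z / 2)) (Cpow (Cinv (Cminus (RtoC 1) (cexpi z))) (S k)).

Definition psiD (k : nat) (z : R) : C :=
  Cminus (Cmult (RtoC (INR (S k))) (psi (S k) z)) (Cmult (RtoC (INR k + /2)) (psi k z)).

Lemma Y_neq0 z : cos z <> 1 -> Cminus (RtoC 1) (cexpi z) <> 0%C.
Proof. intros H E. apply H. unfold cexpi, Cminus, Cplus, Copp in E. simpl in E.
  injection E as E1 E2. lra. Qed.

Lemma cd_psi (k : nat) (t x : R) : cos (t * x) <> 1 ->
  is_cd (fun y => psi k (t * y)) x (Cmult (0, 1) (Cmult (RtoC t) (psiD k (t * x)))).
Proof. intros Hc. pose proof (Y_neq0 _ Hc) as HY.
  assert (Hv := cd_cexpi (t / 2) x).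
  assert (Hw := cd_cexpi t x).
  assert (HYd := cd_minus _ _ x _ _ (cd_const (RtoC 1) x) Hw).
  assert (HiY := cd_inv _ x _ HY HYd).
  assert (HP := cd_cpow _ x _ k HiY).
  assert (Hm := cd_mult _ _ x _ _ Hv HP).
  eapply cd_ext. { intros y. unfold psi. replace (t * y / 2) with (t / 2 * y) by field. reflexivity. }
  eapply cd_eq; [|exact Hm]. cbv beta.
  unfold psiD, psi. replace (t * x / 2) with (t / 2 * x) by field.
  set (v := cexpi (t / 2 * x)). set (w := cexpi (t * x)).
  fold w in HY.
  set (iY := Cinv (Cminus (RtoC 1) w)).
  change (Cpow iY (S k)) with (Cmult iY (Cpow iY k)).
  change (Cpow iY (S (S k))) with (Cmult iY (Cmult iY (Cpow iY k))).
  set (P := Cpow iY k).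
  assert (HiYe : Cmult iY (Cminus (RtoC 1) w) = RtoC 1) by (apply Cinv_l; auto).
  rewrite S_INR, !RtoC_plus.
  unfold iY in *.
  assert (E1 : ((0, t/2) : C) = Cmult (0,1) (Cmult (RtoC t) (Cinv (RtoC 2)))).
  { unfold Cmult, Cinv, RtoC; simpl. f_equal; field. }
  assert (E2 : ((0, t) : C) = Cmult (0,1) (RtoC t)).
  { unfold Cmult, RtoC; simpl. f_equal; ring. }
  assert (E3 : RtoC (/2) = Cinv (RtoC 2)).
  { unfold Cinv, RtoC; simpl. f_equal; field. }
  assert (H2 : RtoC 2 <> 0%C). { intro E; injection E; lra. }
  rewrite E1, E2, E3. set (I := ((0,1) : C)). field. auto.
Qed.

Definition csm {X : Type} (l : list X) (f : X -> C) : C := csum (map f l).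

Lemma csm_nil {X} (f : X -> C) : csm [] f = 0%C. Proof. reflexivity. Qed.
Lemma csm_cons {X} (a : X) l f : csm (a :: l) f = Cplus (f a) (csm l f). Proof. reflexivity. Qed.
Lemma csm_app {X} (l1 l2 : list X) f : csm (l1 ++ l2) f = Cplus (csm l1 f) (csm l2 f).
Proof. induction l1; simpl. unfold csm; simpl; ring. rewrite !csm_cons, IHl1. ring. Qed.
Lemma csm_ext {X} (l : list X) f g : (forall x, In x l -> f x = g x) -> csm l f = csm l g.
Proof. induction l; intros H. reflexivity. rewrite !csm_cons, H, IHl; auto. intros; apply H; simpl; auto. simpl; auto. Qed.
Lemma csm_plus {X} (l : list X) f g : csm l (fun x => Cplus (f x) (g x)) = Cplus (csm l f) (csm l g).
Proof. induction l. unfold csm; simpl; ring. rewrite !csm_cons, IHl. ring. Qed.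
Lemma csm_minus {X} (l : list X) f g : csm l (fun x => Cminus (f x) (g x)) = Cminus (csm l f) (csm l g).
Proof. induction l. unfold csm; simpl; ring. rewrite !csm_cons, IHl. ring. Qed.
Lemma csm_scal {X} (l : list X) c f : csm l (fun x => Cmult c (f x)) = Cmult c (csm l f).
Proof. induction l. unfold csm; simpl; ring. rewrite !csm_cons, IHl. ring. Qed.
Lemma csm_zero {X} (l : list X) (f : X -> C) : (forall x, In x l -> f x = 0%C) -> csm l f = 0%C.
Proof. induction l; intros H. reflexivity. rewrite csm_cons, H, IHl. ring.
  intros; apply H; simpl; auto. simpl; auto. Qed.
Lemma csm_map {X Y} (h : X -> Y) l f : csm (map h l) f = csm l (fun x => f (h x)).
Proof. unfold csm. rewrite map_map. reflexivity. Qed.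
Lemma csm_flat_map {X Y} (h : X -> list Y) l f :
  csm (flat_map h l) f = csm l (fun a => csm (h a) f).
Proof. induction l. reflexivity. simpl flat_map. rewrite csm_app, csm_cons, IHl. reflexivity. Qed.
Lemma csm_swap {X Y} (l1 : list X) (l2 : list Y) h :
  csm l1 (fun a => csm l2 (fun b => h a b)) = csm l2 (fun b => csm l1 (fun a => h a b)).
Proof. induction l1. rewrite csm_nil. symmetry. apply csm_zero. intros; reflexivity.
  rewrite csm_cons, IHl1. rewrite <- csm_plus. apply csm_ext. intros; rewrite csm_cons; reflexivity. Qed.
Lemma csm_single {X} (l : list X) (f : X -> C) r : NoDup l -> In r l ->
  (forall x, In x l -> x <> r -> f x = 0%C) -> csm l f = f r.
Proof. induction l; intros Hn Hr H. destruct Hr.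
  inversion Hn; subst. rewrite csm_cons. destruct (classic (a = r)) as [->|Ha].
  - rewrite csm_zero. ring. intros x Hx. apply H. simpl; auto. intros ->; contradiction.
  - rewrite H, IHl; auto. ring. destruct Hr; [contradiction|auto].
    intros; apply H; simpl; auto. simpl; auto.
Qed.
Lemma csm_seqS (m : nat) g : csm (seq 0 (S m)) g = Cplus (g 0%nat) (csm (seq 0 m) (fun k => g (S k))).
Proof. change (seq 0 (S m)) with (0%nat :: seq 1 m). rewrite csm_cons, <- seq_shift, csm_map. reflexivity. Qed.
Lemma csm_seq_last (m : nat) g : csm (seq 0 (S m)) g = Cplus (csm (seq 0 m) g) (g m).
Proof. rewrite seq_S, csm_app. simpl. unfold csm; simpl. ring. Qed.

Definition D1 (f : R -> C) (x : R) : C :=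
  Cmult (0, -1) (Derive (fun y => Re (f y)) x, Derive (fun y => Im (f y)) x).

Lemma Dj_D1 j F theta : Dj j F theta = D1 (fun x => F (upd theta j x)) (theta j).
Proof. reflexivity. Qed.

Lemma D1_cd f x l : is_cd f x l -> D1 f x = Cmult (0, -1) l.
Proof. intros [H1 H2]. unfold D1. replace (Derive (fun y => Re (f y)) x) with (Re l).
  replace (Derive (fun y => Im (f y)) x) with (Im l). destruct l; reflexivity.
  symmetry; apply is_derive_unique; auto. symmetry; apply is_derive_unique; auto. Qed.

Lemma D1_ext_loc (f g : R -> C) x : locally x (fun y => f y = g y) -> D1 f x = D1 g x.
Proof. intros H. unfold D1. f_equal. f_equal; apply Derive_ext_loc;
  (eapply filter_imp; [|exact H]); intros y Hy; simpl; rewrite Hy; reflexivity. Qed.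

Lemma D1_ext (f g : R -> C) x : (forall y, f y = g y) -> D1 f x = D1 g x.
Proof. intros H. apply D1_ext_loc. apply filter_forall. auto. Qed.

Lemma cd_ext_loc (f g : R -> C) x l : locally x (fun y => f y = g y) -> is_cd f x l -> is_cd g x l.
Proof. intros H [H1 H2]. split.
  - apply (is_derive_ext_loc (fun y => Re (f y))); auto. eapply filter_imp; [|exact H]. intros y ->; reflexivity.
  - apply (is_derive_ext_loc (fun y => Im (f y))); auto. eapply filter_imp; [|exact H]. intros y ->; reflexivity.
Qed.

Lemma cd_csm {X} (l : list X) (F : X -> R -> C) (L : X -> C) x :
  (forall k, In k l -> is_cd (F k) x (L k)) ->
  is_cd (fun y => csm l (fun k => F k y)) x (csm l L).
Proof. induction l; intros H.
  - eapply cd_ext; [|apply (cd_const 0%C)]. intros; reflexivity.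
  - apply (cd_ext (fun y => Cplus (F a y) (csm l (fun k => F k y)))). { intros y. rewrite csm_cons. reflexivity. }
    rewrite csm_cons. apply cd_plus. apply H; simpl; auto. apply IHl. intros; apply H; simpl; auto.
Qed.

Lemma U_open t x : cos (t * x) <> 1 -> locally x (fun y => cos (t * y) <> 1).
Proof. intros H.
  assert (Hc : continuous (fun y => cos (t * y)) x).
  { apply (ex_derive_continuous (K:=R_AbsRing) (V:=R_NormedModule)). auto_derive; auto. }
  apply (Hc (fun z => z <> 1)). 
  assert (He : 0 < Rabs (cos (t * x) - 1)) by (apply Rabs_pos_lt; lra).
  exists (mkposreal _ He). intros z Hz. intro E. subst z.
  unfold ball in Hz; simpl in Hz. unfold AbsRing_ball, abs, minus, plus, opp in Hz; simpl in Hz.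
  rewrite Rabs_minus_sym in Hz. unfold Rminus in Hz. lra.
Qed.

Fixpoint gam (a k : nat) : R :=
  match a with
  | O => if Nat.eqb k 0 then 1 else 0
  | S a' => INR k * (match k with O => 0 | S k' => gam a' k' end) - (INR k + /2) * gam a' k
  end.

Lemma gam_above a k : (a < k)%nat -> gam a k = 0.
Proof. revert k; induction a; intros k H; simpl.
  - destruct k. lia. reflexivity.
  - destruct k. lia. rewrite !IHa by lia. ring.
Qed.

Lemma gam_diag a : gam a a = INR (fact a).
Proof. induction a. reflexivity. cbn [gam]. rewrite IHa, gam_above by lia.
  rewrite fact_simpl, mult_INR. change (match a with O => 1 | S _ => INR a + 1 end) with (INR (S a)). ring. Qed.

Definition Ebig (B a : nat) (z : R) : C := csm (seq 0 B) (fun k => Cmult (RtoC (gam a k)) (psi k z)).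

Lemma Ebig_D (B a : nat) z : (S a < B)%nat ->
  csm (seq 0 B) (fun k => Cmult (RtoC (gam a k)) (psiD k z)) = Ebig B (S a) z.
Proof. intros H. destruct B as [|B']. lia. unfold Ebig, psiD.
  simpl gam.
  rewrite (csm_ext _ (fun k => Cmult (RtoC (gam a k)) (Cminus (Cmult (RtoC (INR (S k))) (psi (S k) z))
      (Cmult (RtoC (INR k + / 2)) (psi k z))))
     (fun k => Cminus (Cmult (RtoC (gam a k * INR (S k))) (psi (S k) z))
                      (Cmult (RtoC ((INR k + /2) * gam a k)) (psi k z)))).
  2:{ intros; rewrite !RtoC_mult. ring. }
  rewrite (csm_ext _ (fun k => Cmult (RtoC (INR k * match k with O => 0 | S k' => gam a k' end - (INR k + /2) * gam a k)) (psi k z))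
     (fun k => Cminus (Cmult (RtoC (INR k * match k with O => 0 | S k' => gam a k' end)) (psi k z))
                      (Cmult (RtoC ((INR k + /2) * gam a k)) (psi k z)))).
  2:{ intros; rewrite RtoC_minus. ring. }
  rewrite !csm_minus. f_equal.
  rewrite csm_seq_last, csm_seqS. rewrite (gam_above a B') by lia.
  simpl INR at 2. rewrite Rmult_0_l, Rmult_0_l.
  rewrite (csm_ext _ (fun k => Cmult (RtoC (INR (S k) * gam a k)) (psi (S k) z))
    (fun k => Cmult (RtoC (gam a k * INR (S k))) (psi (S k) z))).
  2:{ intros; rewrite Rmult_comm; reflexivity. }
  ring.
Qed.

Definition phi (t : R) : R -> C := fun y => psi 0 (t * y).


Lemma Ebig_0 B z : (0 < B)%nat -> Ebig B 0 z = psi 0 z.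
Proof. intros H. destruct B. lia. unfold Ebig. rewrite csm_seqS.
  transitivity (Cplus (Cmult (RtoC (gam 0 0)) (psi 0 z)) 0%C).
  f_equal. apply csm_zero. intros; simpl; ring. simpl; ring. Qed.

Lemma cd_Ebig B a t x : cos (t * x) <> 1 ->
  is_cd (fun y => Ebig B a (t * y)) x
    (Cmult (0, 1) (Cmult (RtoC t) (csm (seq 0 B) (fun k => Cmult (RtoC (gam a k)) (psiD k (t * x)))))).
Proof. intros H. unfold Ebig.
  eapply cd_eq; [|apply cd_csm; intros k _; apply cd_scal; apply cd_psi; exact H].
  rewrite <- !csm_scal. apply csm_ext. intros; ring.
Qed.

Lemma iter_phi B t : forall a, (a < B)%nat -> forall x, cos (t * x) <> 1 ->
  Nat.iter a D1 (phi t) x = Cmult (RtoC (t ^ a)) (Ebig B a (t * x)).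
Proof. induction a; intros Ha x Hx.
  - simpl. rewrite Ebig_0 by lia. unfold phi. ring.
  - change (Nat.iter (S a) D1 (phi t) x) with (D1 (Nat.iter a D1 (phi t)) x).
    rewrite (D1_ext_loc _ (fun y => Cmult (RtoC (t ^ a)) (Ebig B a (t * y)))).
    2:{ eapply filter_imp; [|apply (U_open t x Hx)]. intros y Hy. apply IHa; auto. lia. }
    rewrite (D1_cd _ _ _ (cd_scal _ _ _ _ (cd_Ebig B a t x Hx))).
    rewrite Ebig_D by lia. simpl pow. rewrite RtoC_mult.
    set (E := Ebig B (S a) (t * x)). unfold Cmult at 1 4; simpl.
    destruct E as [e1 e2]. unfold Cmult, RtoC; simpl. f_equal; ring.
Qed.

Lemma cd_iter_phi B t a x : (a < B)%nat -> cos (t * x) <> 1 ->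
  exists l, is_cd (Nat.iter a D1 (phi t)) x l.
Proof. intros Ha Hx. eexists. 
  apply (cd_ext_loc (fun y => Cmult (RtoC (t ^ a)) (Ebig B a (t * y)))).
  { eapply filter_imp; [|apply (U_open t x Hx)]. intros y Hy. symmetry; apply iter_phi; auto. }
  apply cd_scal. apply cd_Ebig; auto.
Qed.

Definition cprodl (l : list nat) (f : nat -> C) : C :=
  fold_right (fun j acc => Cmult (f j) acc) (RtoC 1) l.

Lemma cprod_l n f : cprod n f = cprodl (seq 0 n) f. Proof. reflexivity. Qed.

Lemma cprodl_ext l (f g : nat -> C) : (forall j, In j l -> f j = g j) -> cprodl l f = cprodl l g.
Proof. induction l; intros H; simpl. reflexivity. rewrite H, IHl; auto. intros; apply H; simpl; auto. simpl; auto. Qed.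

Lemma cprodl_mult l (f g : nat -> C) : cprodl l (fun j => Cmult (f j) (g j)) = Cmult (cprodl l f) (cprodl l g).
Proof. induction l; simpl. ring. rewrite IHl. ring. Qed.

Lemma cprodl_extract l (f : nat -> C) k : NoDup l -> In k l ->
  cprodl l f = Cmult (f k) (cprodl l (fun j => if Nat.eqb j k then RtoC 1 else f j)).
Proof. induction l; intros Hn Hk. destruct Hk. inversion Hn; subst. simpl.
  destruct (Nat.eqb_spec a k).
  - subst. rewrite (cprodl_ext l (fun j => if Nat.eqb j k then RtoC 1 else f j) f). ring.
    intros j Hj. destruct (Nat.eqb_spec j k). subst; contradiction. reflexivity.
  - destruct Hk. contradiction. rewrite IHl; auto. ring.
Qed.

Lemma Cmult_integral (a b : C) : Cmult a b = 0%C -> a = 0%C \/ b = 0%C.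
Proof. intros H. destruct (classic (a = 0%C)) as [Ha|Ha]; auto. right.
  replace b with (Cmult (Cinv a) (Cmult a b)) by (field; auto). rewrite H. ring. Qed.

Lemma cprodl_neq0 l (f : nat -> C) : (forall j, In j l -> f j <> 0%C) -> cprodl l f <> 0%C.
Proof. induction l; intros H; simpl. intro E; injection E; lra.
  intro E. apply Cmult_integral in E. destruct E as [E|E]. apply (H a); simpl; auto. auto.
  apply IHl; auto. intros; apply H; simpl; auto. Qed.

Lemma cprodl_zero l (f : nat -> C) k : In k l -> f k = 0%C -> cprodl l f = 0%C.
Proof. induction l; intros Hk Hf; simpl. destruct Hk. destruct Hk as [->|Hk]. rewrite Hf; ring.
  rewrite IHl; auto. ring. Qed.

Definition InB (n : nat) (t : R) (theta : nat -> R) : Prop :=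
  forall j, (j < n)%nat -> cos (t * theta j) <> 1.

Definition Pa (n : nat) (t : R) (A : nat -> nat) (theta : nat -> R) : C :=
  cprod n (fun j => Nat.iter (A j) D1 (phi t) (theta j)).

Lemma Pa_ext n t A1 A2 theta : (forall j, (j < n)%nat -> A1 j = A2 j) -> Pa n t A1 theta = Pa n t A2 theta.
Proof. intros H. unfold Pa. rewrite !cprod_l. apply cprodl_ext. intros j Hj. apply in_seq in Hj. rewrite H; auto. lia. Qed.

Lemma InB_upd n t theta k x : InB n t theta -> cos (t * x) <> 1 -> InB n t (upd theta k x).
Proof. intros H Hx j Hj. unfold upd. destruct (Nat.eqb j k); auto. Qed.

Lemma Dj_Pa n t A k theta : (k < n)%nat -> InB n t theta ->
  Dj k (Pa n t A) theta = Pa n t (fun j => if Nat.eqb j k then S (A k) else A j) theta.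
Proof. intros Hk Hb. rewrite Dj_D1.
  set (C0 := cprodl (seq 0 n) (fun j => if Nat.eqb j k then RtoC 1 else Nat.iter (A j) D1 (phi t) (theta j))).
  assert (Hin : In k (seq 0 n)) by (apply in_seq; lia).
  assert (Hf : forall x, Pa n t A (upd theta k x) = Cmult C0 (Nat.iter (A k) D1 (phi t) x)).
  { intros x. unfold Pa. rewrite cprod_l. rewrite (cprodl_extract _ _ k (seq_NoDup n 0) Hin).
    unfold upd at 1. rewrite Nat.eqb_refl. rewrite Cmult_comm. f_equal. apply cprodl_ext.
    intros j _. unfold upd. destruct (Nat.eqb j k); reflexivity. }
  rewrite (D1_ext _ _ _ Hf).
  destruct (cd_iter_phi (S (A k)) t (A k) (theta k)) as [l Hl]. lia. apply Hb; auto.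
  rewrite (D1_cd _ _ _ (cd_scal _ _ _ _ Hl)).
  unfold Pa. rewrite cprod_l. rewrite (cprodl_extract _ _ k (seq_NoDup n 0) Hin).
  rewrite Nat.eqb_refl.
  change (Nat.iter (S (A k)) D1 (phi t) (theta k)) with (D1 (Nat.iter (A k) D1 (phi t)) (theta k)).
  rewrite (D1_cd _ _ _ Hl).
  replace (cprodl (seq 0 n) _) with C0. ring.
  apply cprodl_ext. intros j _. destruct (Nat.eqb j k); reflexivity.
Qed.

Lemma Dj_ext n t k (G G' : (nat -> R) -> C) : (k < n)%nat ->
  (forall th, InB n t th -> G th = G' th) -> forall th, InB n t th -> Dj k G th = Dj k G' th.
Proof. intros Hk H th Hb. rewrite !Dj_D1. apply D1_ext_loc.
  eapply filter_imp; [|apply (U_open t (th k) (Hb k Hk))]. intros y Hy. apply H. apply InB_upd; auto. Qed.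

Lemma iter_Dj n t k a : (k < n)%nat -> forall (G : (nat -> R) -> C) A,
  (forall th, InB n t th -> G th = Pa n t A th) ->
  forall th, InB n t th -> Nat.iter a (Dj k) G th = Pa n t (fun j => if Nat.eqb j k then (A k + a)%nat else A j) th.
Proof. intros Hk G A HG. induction a; intros th Hb.
  - simpl. rewrite HG; auto. apply Pa_ext. intros j _. destruct (Nat.eqb_spec j k); subst; lia.
  - change (Nat.iter (S a) (Dj k) G th) with (Dj k (Nat.iter a (Dj k) G) th).
    rewrite (Dj_ext n t k _ _ Hk IHa th Hb). rewrite Dj_Pa; auto. apply Pa_ext.
    intros j _. rewrite Nat.eqb_refl. destruct (Nat.eqb_spec j k); subst; lia.
Qed.

Lemma Dmulti_from_Pa n t : forall r k A (G : (nat -> R) -> C), (k + length r <= n)%nat ->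
  (forall th, InB n t th -> G th = Pa n t A th) ->
  forall th, InB n t th -> Dmulti_from r k G th =
     Pa n t (fun j => (A j + (if Nat.leb k j then nth (j - k) r 0 else 0))%nat) th.
Proof. induction r as [|a r IH]; intros k A G Hl HG th Hb.
  - simpl. rewrite HG; auto. apply Pa_ext. intros j _. destruct (Nat.leb k j); destruct (j - k)%nat; simpl; lia.
  - simpl in Hl. simpl Dmulti_from.
    rewrite (iter_Dj n t k a ltac:(lia) _ _ (IH (S k) A G ltac:(lia) HG) th Hb).
    apply Pa_ext. intros j _. destruct (Nat.eqb_spec j k).
    + subst. rewrite Nat.leb_refl. replace (Nat.leb (S k) k) with false by (symmetry; apply Nat.leb_gt; lia).
      rewrite Nat.sub_diag. simpl. lia.
    + destruct (Nat.leb_spec k j); destruct (Nat.leb_spec (S k) j); try lia.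
      replace (j - k)%nat with (S (j - S k)) by lia. simpl. lia.
Qed.

Lemma cexpi_sum (t : R) (th : nat -> R) l :
  cexpi (t / 2 * fold_right (fun j acc => th j + acc) 0 l) = cprodl l (fun j => cexpi (t * th j / 2)).
Proof. induction l; simpl. rewrite Rmult_0_r, cexpi_0. reflexivity.
  rewrite <- IHl, <- cexpi_add. f_equal. field. Qed.

Lemma Cinv_cprodl l (f : nat -> C) : (forall j, In j l -> f j <> 0%C) ->
  Cinv (cprodl l f) = cprodl l (fun j => Cinv (f j)).
Proof. induction l; intros H; simpl.
  - unfold Cinv, RtoC; simpl. f_equal; field.
  - rewrite <- IHl. field. split. apply cprodl_neq0. intros; apply H; simpl; auto.
    apply H; simpl; auto. intros; apply H; simpl; auto. Qed.

Lemma fgen_Pa n t th : InB n t th -> fgen n t th = Pa n t (fun _ => 0%nat) th.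
Proof. intros Hb. unfold fgen, Pa, rsum. rewrite !cprod_l. rewrite cexpi_sum.
  rewrite Cinv_cprodl. rewrite <- cprodl_mult. apply cprodl_ext. intros j Hj.
  simpl. unfold phi, psi. simpl. ring.
  intros j Hj. apply Y_neq0. apply Hb. apply in_seq in Hj; lia.
Qed.

Lemma cprod_pow (t : R) : forall (r : list nat) m,
  cprodl (seq m (length r)) (fun j => RtoC (t ^ nth (j - m) r 0%nat)) = RtoC (t ^ msum r).
Proof. induction r as [|a r IH]; intros m; simpl. reflexivity.
  rewrite Nat.sub_diag. rewrite (cprodl_ext _ _ (fun j => RtoC (t ^ nth (j - S m) r 0%nat))).
  rewrite IH. rewrite pow_add, RtoC_mult. reflexivity.
  intros j Hj. apply in_seq in Hj. replace (j - m)%nat with (S (j - S m)) by lia. reflexivity.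
Qed.

Lemma gterm_formula n u r t B : length r = n -> t <> 0 -> InB n t u ->
  (forall j, (j < n)%nat -> (nth j r 0 < B)%nat) ->
  gterm n u r t = cprod n (fun j => Ebig B (nth j r 0%nat) (t * u j)).
Proof. intros Hl Ht Hb HB. unfold gterm, Dmulti.
  rewrite (Dmulti_from_Pa n t r 0 (fun _ => 0%nat) (fgen n t) ltac:(lia) (fgen_Pa n t) u Hb).
  rewrite (Pa_ext n t _ (fun j => nth j r 0%nat)).
  2:{ intros j _. simpl. rewrite Nat.sub_0_r. reflexivity. }
  unfold Pa. rewrite !cprod_l.
  rewrite (cprodl_ext _ _ (fun j => Cmult (RtoC (t ^ nth j r 0%nat)) (Ebig B (nth j r 0%nat) (t * u j)))).
  2:{ intros j Hj. apply in_seq in Hj. apply iter_phi. apply HB; lia. apply Hb; lia. }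
  rewrite cprodl_mult. subst n.
  rewrite (cprodl_ext _ _ (fun j => RtoC (t ^ nth (j - 0) r 0%nat))).
  2:{ intros; rewrite Nat.sub_0_r; reflexivity. }
  rewrite cprod_pow. rewrite Cmult_assoc, <- RtoC_mult, <- Rpow_mult_distr.
  rewrite Rinv_l by auto. rewrite pow1. ring.
Qed.

Lemma NoDup_map_cons (a : nat) (L : list (list nat)) : NoDup L -> NoDup (map (cons a) L).
Proof. induction 1; simpl; constructor; auto. intro H1. apply in_map_iff in H1.
  destruct H1 as [y [E Hy]]. injection E as ->. contradiction. Qed.

Lemma NoDup_flat_cons (l : list nat) (F : nat -> list (list nat)) :
  NoDup l -> (forall a, NoDup (F a)) -> NoDup (flat_map (fun a => map (cons a) (F a)) l).
Proof. induction 1 as [|a l Ha Hl IH]; intros HF; simpl. constructor.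
  apply NoDup_app. apply NoDup_map_cons; auto. apply IH; auto.
  intros x Hx1 Hx2. apply in_map_iff in Hx1. destruct Hx1 as [y [<- _]].
  apply in_flat_map in Hx2. destruct Hx2 as [b [Hb Hy]]. apply in_map_iff in Hy.
  destruct Hy as [z [E _]]. injection E as ->. contradiction. Qed.

Fixpoint box (n B : nat) : list (list nat) :=
  match n with
  | O => [ [] ]
  | S m => flat_map (fun a => map (cons a) (box m B)) (seq 0 B)
  end.

Lemma NoDup_box n B : NoDup (box n B).
Proof. induction n; simpl. constructor. intro H; destruct H. constructor.
  apply NoDup_flat_cons. apply seq_NoDup. auto. Qed.

Lemma In_box n B K : In K (box n B) <-> length K = n /\ (forall x, In x K -> (x < B)%nat).
Proof. revert K; induction n; intros K; simpl.
  - split. intros [<-|[]]. split; auto. intros x []. intros [H _]. destruct K; simpl in H; auto; lia.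
  - rewrite in_flat_map. split.
    + intros [a [Ha HK]]. apply in_map_iff in HK. destruct HK as [K' [<- HK']]. apply IHn in HK'.
      apply in_seq in Ha. destruct HK' as [H1 H2]. simpl. split. lia. intros x [<-|Hx]. lia. auto.
    + intros [H1 H2]. destruct K as [|a K']. simpl in H1; lia. exists a. split.
      apply in_seq. split. lia. simpl. apply H2; simpl; auto.
      apply in_map. apply IHn. simpl in H1. split. lia. intros; apply H2; simpl; auto.
Qed.

Lemma In_mindices n N r : In r (mindices n N) <-> length r = n /\ (msum r <= N)%nat.
Proof. revert N r; induction n; intros N r; cbn [mindices].
  - simpl. split. intros [<-|[]]. simpl; lia. intros [H _]. destruct r; simpl in H; auto; lia.
  - rewrite in_flat_map. split.
    + intros [a [Ha HK]]. apply in_map_iff in HK. destruct HK as [K' [<- HK']]. apply IHn in HK'.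
      apply in_seq in Ha. simpl. lia.
    + intros [H1 H2]. destruct r as [|a K']. simpl in H1; lia. exists a. simpl in H2. split.
      apply in_seq. lia. apply in_map. apply IHn. simpl in H1. lia.
Qed.

Lemma NoDup_mindices n N : NoDup (mindices n N).
Proof. revert N; induction n; intros N; cbn [mindices]. constructor. intro H; destruct H. constructor.
  apply NoDup_flat_cons. apply seq_NoDup. auto. Qed.

Lemma nth_In_lt (K : list nat) B j : (forall x, In x K -> (x < B)%nat) -> (0 < B)%nat -> (nth j K 0 < B)%nat.
Proof. intros H HB. destruct (Nat.lt_ge_cases j (length K)). apply H, nth_In; auto.
  rewrite nth_overflow; auto. Qed.

Lemma nth_le_msum (r : list nat) j : (nth j r 0 <= msum r)%nat.
Proof. revert j; induction r; intros j; destruct j; simpl; try lia. specialize (IHr j). lia. Qed.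

Lemma csm_mult {X Y} (l1 : list X) (l2 : list Y) g1 g2 :
  Cmult (csm l1 g1) (csm l2 g2) = csm l1 (fun a => csm l2 (fun b => Cmult (g1 a) (g2 b))).
Proof. revert l2 g2. induction l1; intros l2 g2. rewrite csm_nil. unfold csm; simpl. ring.
  rewrite !csm_cons, <- IHl1, (csm_scal l2 (g1 a) g2). ring. Qed.

Lemma distr (B : nat) (f : nat -> nat -> C) : forall n m,
  cprodl (seq m n) (fun j => csm (seq 0 B) (fun k => f j k)) =
  csm (box n B) (fun K => cprodl (seq m n) (fun j => f j (nth (j - m) K 0%nat))).
Proof. induction n; intros m.
  - simpl. unfold csm; simpl. ring.
  - cbn [seq cprodl fold_right]. change (fold_right (fun j acc => Cmult (csm (seq 0 B) (fun k => f j k)) acc) (RtoC 1) (seq (S m) n))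
      with (cprodl (seq (S m) n) (fun j => csm (seq 0 B) (fun k => f j k))).
    rewrite IHn. rewrite csm_mult. simpl box. rewrite csm_flat_map. apply csm_ext. intros a _.
    rewrite csm_map. apply csm_ext. intros K _. cbn [cprodl fold_right].
    rewrite Nat.sub_diag. simpl nth. f_equal. apply cprodl_ext. intros j Hj. apply in_seq in Hj.
    replace (j - m)%nat with (S (j - S m)) by lia. reflexivity.
Qed.

Lemma TL {X Y : Type} (L : list X) (d : X -> C) (G : X -> Y -> C) (f : X -> Y) (mu : X -> nat) :
  NoDup L ->
  (forall r, In r L -> csm L (fun r' => Cmult (d r') (G r' (f r))) = 0%C) ->
  (forall r, In r L -> G r (f r) <> 0%C) ->
  (forall r r', In r L -> In r' L -> r' <> r -> G r' (f r) <> 0%C -> (mu r' < mu r)%nat) ->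
  forall r, In r L -> d r = 0%C.
Proof. intros Hn Hs Hd Ht.
  assert (forall m r, mu r = m -> In r L -> d r = 0%C).
  { intros m. induction m as [m IH] using lt_wf_ind. intros r Hm Hr.
    specialize (Hs r Hr). rewrite (csm_single _ _ r Hn Hr) in Hs.
    - apply Cmult_integral in Hs. destruct Hs; auto. exfalso; apply (Hd r Hr); auto.
    - intros x Hx Hne. destruct (classic (G x (f r) = 0%C)) as [E|E]. rewrite E; ring.
      rewrite (IH (mu x)); auto. ring. subst m. apply Ht; auto. }
  intros r Hr. eapply H; eauto.
Qed.

Lemma VL {X : Type} (L : list X) (z c : X -> C) : NoDup L ->
  (forall x y, In x L -> In y L -> z x = z y -> x = y) ->
  (forall k, (k < length L)%nat -> csm L (fun x => Cmult (c x) (Cpow (z x) k)) = 0%C) ->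
  forall x, In x L -> c x = 0%C.
Proof. revert c. induction L as [|a L IH]; intros c Hn Hz Hs x Hx. destruct Hx.
  inversion Hn as [|a' L' Ha HnL]; subst.
  assert (Hc' : forall y, In y L -> Cmult (c y) (Cminus (z y) (z a)) = 0%C).
  { apply (IH (fun y => Cmult (c y) (Cminus (z y) (z a)))); auto.
    - intros; apply Hz; simpl; auto.
    - intros k Hk. pose proof (Hs (S k) ltac:(simpl; lia)) as H1. pose proof (Hs k ltac:(simpl; lia)) as H0.
      rewrite csm_cons in H1, H0. 
      transitivity (Cminus (Cplus (Cmult (c a) (Cpow (z a) (S k))) (csm L (fun x0 => Cmult (c x0) (Cpow (z x0) (S k)))))
                      (Cmult (z a) (Cplus (Cmult (c a) (Cpow (z a) k)) (csm L (fun x0 => Cmult (c x0) (Cpow (z x0) k)))))).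
      + rewrite Cmult_plus_distr_l, <- csm_scal. simpl Cpow.
        transitivity (Cminus (csm L (fun x0 => Cmult (c x0) (Cmult (z x0) (Cpow (z x0) k))))
                             (csm L (fun x0 => Cmult (z a) (Cmult (c x0) (Cpow (z x0) k))))).
        * rewrite <- csm_minus. apply csm_ext. intros; ring.
        * ring.
      + rewrite H1, H0. ring. }
  assert (HL : forall y, In y L -> c y = 0%C).
  { intros y Hy. specialize (Hc' y Hy). apply Cmult_integral in Hc'. destruct Hc'; auto.
    exfalso. assert (z y = z a). { apply (f_equal (fun w => Cplus w (z a))) in H. 
      replace (Cplus (Cminus (z y) (z a)) (z a)) with (z y) in H by ring. rewrite H; ring. }
    assert (y = a) by (apply Hz; simpl; auto). subst; contradiction. }
  destruct Hx as [<-|Hx]; auto.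
  pose proof (Hs 0%nat ltac:(simpl; lia)) as H0. rewrite csm_cons, csm_zero in H0.
  simpl in H0. replace (c a) with (Cplus (Cmult (c a) (RtoC 1)) 0%C) by ring. auto.
  intros; simpl. rewrite HL; auto. ring.
Qed.

Lemma cos_ne1 x : 0 < x < 2 * PI -> cos x <> 1.
Proof. intros [H1 H2] E. replace x with (2 * (x / 2)) in E by field. rewrite cos_2a_sin in E.
  assert (0 < sin (x / 2)) by (apply sin_gt_0; lra). nra. Qed.

Lemma cexpi_inj_small a b : Rabs (a - b) < 2 * PI -> cexpi a = cexpi b -> a = b.
Proof. intros H E. unfold cexpi in E. injection E as E1 E2.
  assert (Hc : cos (a - b) = 1).
  { rewrite cos_minus, E1, E2. pose proof (sin2_cos2 b). unfold Rsqr in H0. lra. }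
  destruct (Rtotal_order a b) as [Hl|[He|Hg]]; auto; exfalso.
  - rewrite <- cos_neg in Hc. replace (- (a - b)) with (b - a) in Hc by ring.
    apply (cos_ne1 (b - a)); auto. rewrite Rabs_left in H by lra. lra.
  - apply (cos_ne1 (a - b)); auto. rewrite Rabs_right in H by lra. lra.
Qed.

Definition rsl {X} (L : list X) (g : X -> R) : R := fold_right (fun x acc => g x + acc) 0 L.

Lemma rsl_nonneg {X} (L : list X) g : (forall x, 0 <= g x) -> 0 <= rsl L g.
Proof. intros H. induction L; simpl. lra. specialize (H a). lra. Qed.

Lemma rsl_ge {X} (L : list X) g x : (forall x, 0 <= g x) -> In x L -> g x <= rsl L g.
Proof. intros H Hx. induction L. destruct Hx. destruct Hx as [<-|Hx]; simpl.
  pose proof (rsl_nonneg L g H). lra. specialize (IHL Hx). specialize (H a). lra. Qed.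

Lemma EI1 {X} (L : list X) (lam : X -> R) (beta : X -> C) (T : R) : NoDup L -> 0 < T ->
  (forall x y, In x L -> In y L -> lam x = lam y -> x = y) ->
  (forall t, 0 < t < T -> csm L (fun x => Cmult (beta x) (cexpi (t * lam x))) = 0%C) ->
  forall x, In x L -> beta x = 0%C.
Proof. intros Hn HT Hinj Hs.
  set (S := rsl L (fun x => Rabs (lam x))).
  assert (HS : 0 <= S) by (apply rsl_nonneg; intros; apply Rabs_pos).
  set (m := INR (length L)).
  assert (Hm : 0 <= m) by apply pos_INR.
  set (d := Rmin (T / (2 * (m + 1))) (PI / (S + 1))).
  assert (Hd1 : d <= T / (2 * (m + 1))) by apply Rmin_l.
  assert (Hd2 : d <= PI / (S + 1)) by apply Rmin_r.
  assert (Hd0 : 0 < d). { apply Rmin_pos. apply Rdiv_lt_0_compat; lra. apply Rdiv_lt_0_compat. apply PI_RGT_0. lra. }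
  intros x Hx.
  assert (Hc : Cmult (beta x) (cexpi (T / 2 * lam x)) = 0%C).
  { apply (VL L (fun y => cexpi (d * lam y)) (fun y => Cmult (beta y) (cexpi (T / 2 * lam y)))); auto.
    - intros y1 y2 H1 H2 E. apply Hinj; auto. apply cexpi_inj_small in E.
      apply Rmult_eq_reg_l in E; lra.
      assert (A1 := rsl_ge L (fun x => Rabs (lam x)) y1 (fun _ => Rabs_pos _) H1).
      assert (A2 := rsl_ge L (fun x => Rabs (lam x)) y2 (fun _ => Rabs_pos _) H2).
      fold S in A1, A2. simpl in A1, A2.
      replace (d * lam y1 - d * lam y2) with (d * (lam y1 - lam y2)) by ring.
      rewrite Rabs_mult, Rabs_right by lra.
      assert (Rabs (lam y1 - lam y2) <= 2 * S).
      { unfold Rminus. eapply Rle_trans. apply Rabs_triang. rewrite Rabs_Ropp. lra. }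
      assert (d * (S + 1) <= PI).
      { apply (Rmult_le_compat_r (S + 1)) in Hd2; [|lra]. unfold Rdiv in Hd2.
        rewrite Rmult_assoc, Rinv_l in Hd2 by lra. lra. }
      pose proof PI_RGT_0. nra.
    - intros k Hk. rewrite <- (Hs (T / 2 + INR k * d)).
      + apply csm_ext. intros y _. rewrite cexpi_pow, <- Cmult_assoc, <- cexpi_add. f_equal. f_equal. ring.
      + assert (INR k <= m - 1). { unfold m.
          assert (INR (Datatypes.S k) <= INR (length L)) by (apply le_INR; lia). rewrite S_INR in H. lra. }
        assert (0 <= INR k) by apply pos_INR.
        split. nra.
        assert (d * (2 * (m + 1)) <= T).
        { apply (Rmult_le_compat_r (2 * (m + 1))) in Hd1; [|lra]. unfold Rdiv in Hd1.
          rewrite Rmult_assoc, Rinv_l in Hd1 by lra. lra. }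
        nra. }
  apply Cmult_integral in Hc. destruct Hc as [Hc|Hc]; auto. exfalso; apply (cexpi_neq0 _ Hc).
Qed.

Fixpoint bco (m e : nat) : R :=
  match m with
  | O => if Nat.eqb e 0 then 1 else 0
  | S m' => bco m' e - (match e with O => 0 | S e' => bco m' e' end)
  end.

Lemma bco_above m e : (m < e)%nat -> bco m e = 0.
Proof. revert e; induction m; intros e H; simpl. destruct e. lia. reflexivity.
  destruct e. lia. rewrite !IHm by lia. ring. Qed.

Lemma bco_diag m : bco m m <> 0.
Proof. assert (bco m m = (-1) ^ m). { induction m. reflexivity. cbn [bco]. rewrite IHm, bco_above by lia.
  simpl. ring. } rewrite H. apply pow_nonzero. lra. Qed.

Lemma Cpow_add (z : C) a b : Cpow z (a + b) = Cmult (Cpow z a) (Cpow z b).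
Proof. induction a; simpl. ring. rewrite IHa. ring. Qed.

Lemma Cpow_inv (z : C) k : z <> 0%C -> Cmult (Cpow (Cinv z) k) (Cpow z k) = RtoC 1.
Proof. intros H. induction k; simpl. ring.
  transitivity (Cmult (Cmult (Cinv z) z) (Cmult (Cpow (Cinv z) k) (Cpow z k))). ring.
  rewrite IHk, Cinv_l; auto. ring. Qed.

Lemma pow_expand (B : nat) (w : C) : forall m, (m < B)%nat ->
  Cpow (Cminus (RtoC 1) w) m = csm (seq 0 B) (fun e => Cmult (RtoC (bco m e)) (Cpow w e)).
Proof. destruct B as [|B']. intros; lia. induction m; intros Hm.
  - rewrite csm_seqS. transitivity (Cplus (Cmult (RtoC (bco 0 0)) (Cpow w 0)) 0%C).
    simpl; ring. f_equal. symmetry. apply csm_zero. intros; simpl; ring.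
  - simpl Cpow. rewrite IHm by lia. cbn [bco].
    set (X := csm (seq 0 B') (fun e => Cmult (RtoC (bco m e)) (Cpow w (S e)))).
    assert (E1 : csm (seq 0 (S B')) (fun e => Cmult (RtoC (bco m e - match e with O => 0 | S e' => bco m e' end)) (Cpow w e))
       = Cminus (csm (seq 0 (S B')) (fun e => Cmult (RtoC (bco m e)) (Cpow w e))) X).
    { transitivity (Cminus (csm (seq 0 (S B')) (fun e => Cmult (RtoC (bco m e)) (Cpow w e)))
          (csm (seq 0 (S B')) (fun e => Cmult (RtoC (match e with O => 0 | S e' => bco m e' end)) (Cpow w e)))).
      - rewrite <- csm_minus. apply csm_ext. intros. rewrite RtoC_minus. ring.
      - rewrite (csm_seqS B' (fun e => Cmult (RtoC (match e with O => 0 | S e' => bco m e' end)) (Cpow w e))). unfold X. simpl. ring. }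
    assert (E2 : Cmult w (csm (seq 0 (S B')) (fun e => Cmult (RtoC (bco m e)) (Cpow w e))) = X).
    { rewrite <- csm_scal. rewrite csm_seq_last. rewrite (bco_above m B') by lia. unfold X.
      transitivity (Cplus X 0%C). unfold X. f_equal. apply csm_ext. intros; simpl; ring. simpl; ring. unfold X; ring. }
    rewrite E1, <- E2. ring.
Qed.

Lemma psi_mul k B z : (k < B)%nat -> cos z <> 1 ->
  Cmult (psi k z) (Cpow (Cminus (RtoC 1) (cexpi z)) B) =
  Cmult (cexpi (z / 2)) (Cpow (Cminus (RtoC 1) (cexpi z)) (B - 1 - k)).
Proof. intros Hk Hc. pose proof (Y_neq0 _ Hc) as HY. unfold psi.
  replace B with (S k + (B - 1 - k))%nat at 1 by lia. rewrite Cpow_add.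
  transitivity (Cmult (cexpi (z / 2)) (Cmult (Cmult (Cpow (Cinv (Cminus (RtoC 1) (cexpi z))) (S k))
     (Cpow (Cminus (RtoC 1) (cexpi z)) (S k))) (Cpow (Cminus (RtoC 1) (cexpi z)) (B - 1 - k)))). ring.
  rewrite Cpow_inv; auto. ring. Qed.

Definition lam (n : nat) (u : nat -> R) (E : list nat) : R :=
  fold_right (fun j acc => INR (nth j E 0%nat) * u j + acc) 0 (seq 0 n).

Lemma cexpi_lam_l (t : R) (u : nat -> R) (E : list nat) l :
  cprodl l (fun j => cexpi (t * (INR (nth j E 0%nat) * u j))) =
  cexpi (t * fold_right (fun j acc => INR (nth j E 0%nat) * u j + acc) 0 l).
Proof. induction l; simpl. rewrite Rmult_0_r, cexpi_0. reflexivity.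
  rewrite IHl, <- cexpi_add. f_equal. ring. Qed.

Lemma lam_inj n u (hind : Q_lin_indep n u) B E E' : In E (box n B) -> In E' (box n B) ->
  lam n u E = lam n u E' -> E = E'.
Proof. intros H1 H2 Heq. apply In_box in H1, H2. destruct H1 as [L1 _], H2 as [L2 _].
  set (q := fun j => inject_Z (Z.of_nat (nth j E 0%nat) - Z.of_nat (nth j E' 0%nat))).
  assert (Hq : forall j, Q2R (q j) = INR (nth j E 0%nat) - INR (nth j E' 0%nat)).
  { intros j. unfold q, Q2R, inject_Z. simpl. rewrite minus_IZR, <- !INR_IZR_INZ. field. }
  assert (Hl : forall l, fold_right (fun j acc => Q2R (q j) * u j + acc) 0 l =
     fold_right (fun j acc => INR (nth j E 0%nat) * u j + acc) 0 l -
     fold_right (fun j acc => INR (nth j E' 0%nat) * u j + acc) 0 l).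
  { induction l; simpl. ring. rewrite IHl, Hq. ring. }
  assert (Hs : rsum n (fun j => Q2R (q j) * u j) = 0).
  { unfold rsum. rewrite Hl. unfold lam in Heq. rewrite Heq. ring. }
  specialize (hind q Hs).
  apply nth_ext with (d := 0%nat) (d' := 0%nat). congruence.
  intros j Hj. specialize (hind j ltac:(lia)). apply Qeq_eqR in hind. rewrite Hq in hind.
  unfold Q2R in hind. simpl in hind. apply INR_eq. lra.
Qed.

Lemma msum_lt : forall K K' : list nat, length K = length K' ->
  (forall j, (nth j K' 0 <= nth j K 0)%nat) -> K' <> K -> (msum K' < msum K)%nat.
Proof. induction K as [|a K IH]; intros K' Hl Hle Hne; destruct K' as [|b K']; simpl in *; try lia.
  congruence. pose proof (Hle 0%nat) as H0; simpl in H0.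
  assert (Hle' : forall j, (nth j K' 0 <= nth j K 0)%nat) by (intros j; apply (Hle (S j))).
  destruct (list_eq_dec Nat.eq_dec K' K) as [->|Hn].
  - assert (b <> a) by congruence. lia.
  - specialize (IH K' ltac:(lia) Hle' Hn). lia.
Qed.

Lemma msum_box n B K : In K (box n B) -> (msum K <= n * B)%nat.
Proof. intros H. apply In_box in H. destruct H as [Hl H]. subst n. induction K; simpl. lia.
  assert (a < B)%nat by (apply H; simpl; auto). specialize (IHK ltac:(intros; apply H; simpl; auto)). lia. Qed.

Definition Tn (n : nat) (u : nat -> R) : R := 2 * PI / (1 + rsum n u).

Lemma fold_ge (g : nat -> R) l x : (forall y, In y l -> 0 <= g y) -> In x l ->
  g x <= fold_right (fun j acc => g j + acc) 0 l /\ 0 <= fold_right (fun j acc => g j + acc) 0 l.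
Proof. revert x. induction l; intros x H Hx. destruct Hx.
  assert (IH' : forall z, In z l -> g z <= fold_right (fun j acc => g j + acc) 0 l /\ 0 <= fold_right (fun j acc => g j + acc) 0 l)
    by (intros; apply IHl; auto; intros; apply H; simpl; auto).
  assert (H0 : 0 <= fold_right (fun j acc => g j + acc) 0 l).
  { destruct l. simpl; lra. apply (IH' n); simpl; auto. }
  pose proof (H a (or_introl eq_refl)).
  destruct Hx as [<-|Hx]; simpl. lra. specialize (IH' x Hx). lra. Qed.

Lemma t_range n u (hpos : forall j, (j < n)%nat -> 0 < u j) t : 0 < t < Tn n u ->
  forall j, (j < n)%nat -> 0 < t * u j < 2 * PI.
Proof. intros [H1 H2] j Hj.
  assert (Hin : In j (seq 0 n)) by (apply in_seq; lia).
  destruct (fold_ge u (seq 0 n) j (fun y Hy => Rlt_le _ _ (hpos y ltac:(apply in_seq in Hy; lia))) Hin) as [A B].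
  fold (rsum n u) in A, B. pose proof (hpos j Hj). split. nra.
  unfold Tn in H2. apply (Rmult_lt_compat_r (1 + rsum n u)) in H2; [|lra].
  unfold Rdiv in H2. rewrite Rmult_assoc, Rinv_l in H2 by lra. nra. Qed.

Lemma Tn_pos n u : (forall j, (j < n)%nat -> 0 < u j) -> 0 < Tn n u.
Proof. intros hpos. unfold Tn. 
  assert (0 <= rsum n u).
  { destruct n. unfold rsum; simpl; lra.
    apply (fold_ge u (seq 0 (S n)) 0%nat). intros y Hy. apply in_seq in Hy. apply Rlt_le, hpos. lia.
    apply in_seq; lia. }
  apply Rdiv_lt_0_compat. pose proof PI_RGT_0; lra. lra. Qed.

Lemma InB_t n u (hpos : forall j, (j < n)%nat -> 0 < u j) t : 0 < t < Tn n u -> InB n t u.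
Proof. intros Ht j Hj. apply cos_ne1. apply (t_range n u hpos t Ht j Hj). Qed.

Lemma EIn n u (hind : Q_lin_indep n u) B T (beta : list nat -> C) : 0 < T ->
  (forall t, 0 < t < T -> csm (box n B) (fun E => Cmult (beta E) (cexpi (t * lam n u E))) = 0%C) ->
  forall E, In E (box n B) -> beta E = 0%C.
Proof. intros HT H. apply (EI1 (box n B) (lam n u) beta T (NoDup_box n B) HT); auto.
  intros; eapply lam_inj; eauto. Qed.

Definition Psi n u (K : list nat) t : C := cprodl (seq 0 n) (fun j => psi (nth j K 0%nat) (t * u j)).
Definition Bt n B (K E : list nat) : C := cprodl (seq 0 n) (fun j => RtoC (bco (B - 1 - nth j K 0%nat) (nth j E 0%nat))).

Lemma Psi_expand n u (hpos : forall j, (j < n)%nat -> 0 < u j) B t K : (0 < B)%nat -> 0 < t < Tn n u -> In K (box n B) ->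
  Cmult (Psi n u K t) (cprodl (seq 0 n) (fun j => Cpow (Cminus (RtoC 1) (cexpi (t * u j))) B)) =
  Cmult (cprodl (seq 0 n) (fun j => cexpi (t * u j / 2)))
        (csm (box n B) (fun E => Cmult (Bt n B K E) (cexpi (t * lam n u E)))).
Proof. intros HB Ht HK. pose proof (InB_t n u hpos t Ht) as Hb. apply In_box in HK as HK'. destruct HK' as [HL HKB].
  unfold Psi. rewrite <- cprodl_mult.
  rewrite (cprodl_ext _ _ (fun j => Cmult (cexpi (t * u j / 2)) (Cpow (Cminus (RtoC 1) (cexpi (t * u j))) (B - 1 - nth j K 0%nat)))).
  2:{ intros j Hj. apply in_seq in Hj. apply psi_mul. apply nth_In_lt; auto. apply Hb; lia. }
  rewrite cprodl_mult. f_equal.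
  rewrite (cprodl_ext _ _ (fun j => csm (seq 0 B) (fun e => Cmult (RtoC (bco (B - 1 - nth j K 0%nat) e)) (Cpow (cexpi (t * u j)) e)))).
  2:{ intros j _. apply pow_expand. lia. }
  rewrite distr. apply csm_ext. intros E _. unfold Bt, lam. rewrite <- cexpi_lam_l. rewrite <- cprodl_mult.
  apply cprodl_ext. intros j _. rewrite Nat.sub_0_r, cexpi_pow. f_equal. f_equal. ring.
Qed.

Lemma PIn n u (hpos : forall j, (j < n)%nat -> 0 < u j) (hind : Q_lin_indep n u) B (alpha : list nat -> C) :
  (0 < B)%nat ->
  (forall t, 0 < t < Tn n u -> csm (box n B) (fun K => Cmult (alpha K) (Psi n u K t)) = 0%C) ->
  forall K, In K (box n B) -> alpha K = 0%C.
Proof. intros HB H.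
  assert (Hg : forall E, In E (box n B) -> csm (box n B) (fun K => Cmult (alpha K) (Bt n B K E)) = 0%C).
  { apply (EIn n u hind B (Tn n u)). apply Tn_pos; auto.
    intros t Ht.
    set (P := cprodl (seq 0 n) (fun j => Cpow (Cminus (RtoC 1) (cexpi (t * u j))) B)).
    set (V := cprodl (seq 0 n) (fun j => cexpi (t * u j / 2))).
    assert (HV : V <> 0%C) by (apply cprodl_neq0; intros; apply cexpi_neq0).
    assert (E : Cmult V (csm (box n B) (fun E => Cmult (csm (box n B) (fun K => Cmult (alpha K) (Bt n B K E))) (cexpi (t * lam n u E))))
               = Cmult (csm (box n B) (fun K => Cmult (alpha K) (Psi n u K t))) P).
    { symmetry. rewrite (Cmult_comm _ P), <- (csm_scal (box n B) P).
      rewrite (csm_ext (box n B) (fun x => Cmult P (Cmult (alpha x) (Psi n u x t)))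
         (fun K => Cmult V (csm (box n B) (fun E => Cmult (alpha K) (Cmult (Bt n B K E) (cexpi (t * lam n u E))))))).
      2:{ intros K HK.
          transitivity (Cmult (alpha K) (Cmult (Psi n u K t) P)). ring.
          unfold P. rewrite Psi_expand; auto. fold V. rewrite (csm_scal (box n B) (alpha K)). ring. }
      rewrite csm_scal. f_equal. rewrite csm_swap. symmetry. apply csm_ext. intros E _.
      rewrite Cmult_comm, <- csm_scal. apply csm_ext. intros; ring. }
    rewrite H in E; auto. assert (E' : Cmult V (csm (box n B) (fun E => Cmult (csm (box n B) (fun K => Cmult (alpha K) (Bt n B K E))) (cexpi (t * lam n u E)))) = 0%C).
    { rewrite E. ring. }
    apply Cmult_integral in E'. destruct E'; auto. contradiction. }
  apply (TL (box n B) alpha (Bt n B) (fun K => map (fun k => B - 1 - k)%nat K) msum (NoDup_box n B)).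
  - intros K HK. apply Hg. apply In_box in HK. apply In_box. destruct HK as [H1 H2]. split.
    rewrite length_map; auto. intros x Hx. apply in_map_iff in Hx. destruct Hx as [y [<- _]]. lia.
  - intros K HK. apply In_box in HK. destruct HK as [H1 H2]. unfold Bt. apply cprodl_neq0.
    intros j Hj. apply in_seq in Hj.
    rewrite (nth_indep (map (fun k => B - 1 - k)%nat K) 0%nat ((fun k => B - 1 - k)%nat 0%nat)) by (rewrite length_map; lia).
    rewrite map_nth. intro E. injection E as E. apply (bco_diag _ E).
  - intros K K' HK HK' Hne Hnz. apply In_box in HK. apply In_box in HK'.
    destruct HK as [H1 H2], HK' as [H1' H2']. apply msum_lt; auto. congruence.
    intros j. destruct (Nat.lt_ge_cases j n).
    + destruct (Nat.le_gt_cases (nth j K' 0%nat) (nth j K 0%nat)) as [|Hgt]; auto. exfalso. apply Hnz.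
      unfold Bt. apply (cprodl_zero _ _ j). apply in_seq; lia.
      rewrite (nth_indep (map (fun k => B - 1 - k)%nat K) 0%nat ((fun k => B - 1 - k)%nat 0%nat)) by (rewrite length_map; lia).
      rewrite map_nth. rewrite bco_above. reflexivity.
      assert (nth j K 0 < B)%nat by (apply nth_In_lt; auto). assert (nth j K' 0 < B)%nat by (apply nth_In_lt; auto). lia.
    + rewrite !nth_overflow by lia. lia.
Qed.

Definition Gam n (r K : list nat) : C := cprodl (seq 0 n) (fun j => RtoC (gam (nth j r 0%nat) (nth j K 0%nat))).

Lemma MI n u (hpos : forall j, (j < n)%nat -> 0 < u j) (hind : Q_lin_indep n u) B (L : list (list nat)) (d : list nat -> C) :
  (0 < B)%nat -> NoDup L -> (forall r, In r L -> In r (box n B)) ->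
  (forall t, 0 < t < Tn n u -> csm L (fun r => Cmult (d r) (cprod n (fun j => Ebig B (nth j r 0%nat) (t * u j)))) = 0%C) ->
  forall r, In r L -> d r = 0%C.
Proof. intros HB Hn HL H.
  assert (Hexp : forall r t, cprod n (fun j => Ebig B (nth j r 0%nat) (t * u j)) =
     csm (box n B) (fun K => Cmult (Gam n r K) (Psi n u K t))).
  { intros r t. rewrite cprod_l. unfold Ebig.
    rewrite (distr B (fun j k => Cmult (RtoC (gam (nth j r 0%nat) k)) (psi k (t * u j))) n 0).
    apply csm_ext. intros K _. unfold Gam, Psi. rewrite <- cprodl_mult. apply cprodl_ext.
    intros j _. rewrite Nat.sub_0_r. reflexivity. }
  assert (Hz : forall K, In K (box n B) -> csm L (fun r => Cmult (d r) (Gam n r K)) = 0%C).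
  { apply (PIn n u hpos hind B (fun K => csm L (fun r => Cmult (d r) (Gam n r K))) HB).
    intros t Ht. rewrite <- (H t Ht). 
    rewrite (csm_ext L _ (fun r => csm (box n B) (fun K => Cmult (Cmult (d r) (Gam n r K)) (Psi n u K t)))).
    2:{ intros r _. rewrite Hexp, <- csm_scal. apply csm_ext. intros; ring. }
    rewrite csm_swap. apply csm_ext. intros K _. rewrite Cmult_comm, <- csm_scal. apply csm_ext. intros; ring. }
  apply (TL L d (Gam n) (fun r => r) (fun r => n * B - msum r)%nat Hn).
  - intros r Hr. apply Hz. auto.
  - intros r Hr. unfold Gam. apply cprodl_neq0. intros j _. rewrite gam_diag.
    intro E. injection E as E. apply (INR_fact_neq_0 _ E).
  - intros r r' Hr Hr' Hne Hnz. 
    assert (Hb := msum_box n B r' (HL r' Hr')).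
    pose proof (proj1 (In_box _ _ _) (HL r Hr)) as Hr2. pose proof (proj1 (In_box _ _ _) (HL r' Hr')) as Hr2'. destruct Hr2 as [H1 _], Hr2' as [H1' _].
    assert (msum r < msum r')%nat; [|lia].
    apply msum_lt; auto. congruence.
    intros j. destruct (Nat.lt_ge_cases j n).
    + destruct (Nat.le_gt_cases (nth j r 0%nat) (nth j r' 0%nat)) as [|Hgt]; auto. exfalso. apply Hnz.
      unfold Gam. apply (cprodl_zero _ _ j). apply in_seq; lia. rewrite gam_above by lia. reflexivity.
    + rewrite !nth_overflow by lia. lia.
Qed.

Lemma In_le_msum (r : list nat) x : In x r -> (x <= msum r)%nat.
Proof. induction r; simpl; intros H. destruct H. destruct H as [->|H]. lia. specialize (IHr H). lia. Qed.

Theorem theorem3 (n : nat) (u : nat -> R)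
  (hpos : forall j, (j < n)%nat -> 0 < u j)
  (hind : Q_lin_indep n u)
  (c c' : list nat -> nat -> C) (l : nat)
  (hV : forall s, (s <= l)%nat -> forall t, admissible_t n u t ->
          Vcoef n u c s t = Vcoef n u c' s t) :
  forall (r : list nat) (i : nat),
    length r = n -> (1 <= msum r)%nat ->
    (2 * msum r - 2 + i <= l)%nat ->
    c r i = c' r i.
Proof.
  intros r0 i Hlen Hm Hs.
  set (s := (2 * msum r0 - 2 + i)%nat) in *.
  set (N := S s). set (B := S N).
  set (L := mindices n N).
  set (d := fun r => if ((1 <=? msum r) && (2 * msum r <=? s + 2))%nat
                     then Cminus (c r (s + 2 - 2 * msum r)%nat) (c' r (s + 2 - 2 * msum r)%nat) else 0%C).
  assert (HL : forall r, In r L -> In r (box n B)).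
  { intros r Hr. apply In_mindices in Hr. destruct Hr as [H1 H2]. apply In_box. split; auto.
    intros x Hx. apply In_le_msum in Hx. unfold B. lia. }
  assert (Hd : forall r, In r L -> d r = 0%C).
  { apply (MI n u hpos hind B L d ltac:(unfold B; lia) (NoDup_mindices n N) HL).
    intros t Ht. pose proof (t_range n u hpos t Ht) as Htr.
    assert (Hadm : admissible_t n u t).
    { split. lra. intros j Hj k E. specialize (Htr j Hj). rewrite E in Htr.
      pose proof PI_RGT_0. destruct Htr as [A1 A2].
      assert (0 < IZR k) by nra. assert (IZR k < 1) by nra.
      apply lt_0_IZR in H0. apply lt_IZR in H1. lia. }
    pose proof (hV s Hs t Hadm) as HVe. unfold Vcoef in HVe. fold N in HVe. fold L in HVe.
    change (csum (map ?f L)) with (csm L f) in HVe.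
    assert (Hz : Cminus (csm L (fun r => if ((1 <=? msum r) && (2 * msum r <=? s + 2))%nat
          then Cmult (c r (s + 2 - 2 * msum r)%nat) (gterm n u r t) else RtoC 0))
        (csm L (fun r => if ((1 <=? msum r) && (2 * msum r <=? s + 2))%nat
          then Cmult (c' r (s + 2 - 2 * msum r)%nat) (gterm n u r t) else RtoC 0)) = 0%C).
    { rewrite HVe. ring. }
    rewrite <- Hz, <- csm_minus. apply csm_ext. intros r Hr.
    pose proof (proj1 (In_mindices _ _ _) Hr) as [Hr1 Hr2].
    rewrite (gterm_formula n u r t B Hr1 ltac:(lra) (InB_t n u hpos t Ht)).
    2:{ intros j Hj. pose proof (nth_le_msum r j). unfold B. lia. }
    unfold d. destruct (((1 <=? msum r) && (2 * msum r <=? s + 2))%nat); ring. }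
  specialize (Hd r0). unfold d in Hd.
  assert (Hc : ((1 <=? msum r0) && (2 * msum r0 <=? s + 2))%nat = true).
  { apply andb_true_intro. split; apply Nat.leb_le; unfold s; lia. }
  rewrite Hc in Hd. replace (s + 2 - 2 * msum r0)%nat with i in Hd by (unfold s; lia).
  assert (Cminus (c r0 i) (c' r0 i) = 0%C).
  { apply Hd. apply In_mindices. split; auto. unfold N, s. lia. }
  replace (c r0 i) with (Cplus (Cminus (c r0 i) (c' r0 i)) (c' r0 i)) by ring. rewrite H. ring.
Qed.
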